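(* Let $p$ be an odd prime, let $d>1$ be an integer, and let $q$ be an even power of $p$ with $q \equiv 1 \pmod{2d}$. The subfield $\mathbb{F}_{\sqrt{q}}$ of $\mathbb{F}_q$ forms a clique in the generalized Paley graph $GP(q,d)$ if and only if $d \mid (\sqrt{q}+1)$.
   Context: For a prime power $q$ and an integer $d>1$ with $d \mid q-1$, the $d$-Paley graph $GP(q,d)$ is the graph with vertex set $\mathbb{F}_q$ in which two distinct vertices $x,y$ are adjacent if and only if $x-y$ is a $d$-th power in $\mathbb{F}_q^*$. *)

(* Defs.v *)
From HB Require Import structures.
From mathcomp Require Import all_boot all_order all_algebra all_field.
Set Implicit Arguments. Unset Strict Implicit. Unset Printing Implicit Defensive.
Import GRing.Theory.
Local Open Scope ring_scope.

Definition is_dth_power (F : finFieldType) (d : nat) (x : F) : bool :=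
  [exists z : F, (z != 0) && (x == z ^+ d)].

Definition gp_adj (F : finFieldType) (d : nat) (x y : F) : bool :=
  (x != y) && is_dth_power d (x - y).

Definition gp_clique (F : finFieldType) (d : nat) (S : {set F}) : Prop :=
  forall x y, x \in S -> y \in S -> x != y -> gp_adj d x y.

(* The subfield of F of order r (when r = sqrt|F|): fixed points of x |-> x^r. *)
Definition subfield_of_order (F : finFieldType) (r : nat) : {set F} :=
  [set x : F | x ^+ r == x].

(* Main.v *)
Require Import Defs.
From HB Require Import structures.
From mathcomp Require Import all_boot all_order all_algebra all_field.
Local Open Scope ring_scope.
From mathcomp Require Import cyclic.
Import GRing.Theory.

Lemma unity_card {F : finFieldType} {x : F} : x != 0 -> x ^+ #|F|.-1 = 1.
Proof.
move=> x0; have := expf_card x.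
have h : #|F| = (#|F|.-1).+1 by rewrite prednK // (cardD1 x).
rewrite {1}h exprS => /eqP; rewrite -[X in _ == X]mulr1 (inj_eq (mulfI x0)).
by move/eqP.
Qed.

Lemma prim_gen (F : finFieldType) : {g : F | (#|F|.-1).-primitive_root g}.
Proof.
have n0 : (0 < #|F|.-1)%N by rewrite -ltnS prednK ?finNzRing_gt1 // (cardD1 (0:F)).
pose rs := enum (predC1 (0:F)).
have : has (#|F|.-1).-primitive_root rs.
  apply: has_prim_root => //.
  - apply/allP => x; rewrite mem_enum /= => x0; apply/unity_rootP; exact: unity_card.
  - exact: enum_uniq.
  - by rewrite -cardE cardC1.
by case/hasP/sig2W => g _ pg; exists g.
Qed.

Lemma frob_sub (F : finFieldType) (p k : nat) (x y : F) :
  prime p -> odd p -> p \in [pchar F] -> (x - y) ^+ (p ^ k) = x ^+ (p ^ k) - y ^+ (p ^ k).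
Proof.
move=> pp op pc.
have hn : [pchar F].-nat (p ^ k)%N.
  by rewrite (eq_pnat _ (pcharf_eq pc)) pnatX pnat_id.
rewrite exprDn_pchar //; congr (_ + _).
rewrite -mulN1r exprMn -signr_odd oddX op orbT /= expr1 mulN1r //.
Qed.

Theorem lemma1p5 (p k d : nat) (F : finFieldType) :
  prime p -> odd p -> (0 < k)%N -> (1 < d)%N ->
  #|F| = (p ^ (2 * k))%N ->
  (p ^ (2 * k) = 1 %[mod 2 * d])%N ->
  gp_clique d (subfield_of_order F (p ^ k)) <-> (d %| p ^ k + 1)%N.
Proof.
move=> pp op k0 d1 hF hmod.
have pc : p \in [pchar F] by apply: (card_finPcharP hF).
set r := (p ^ k)%N.
have p3 : (2 < p)%N.
  by move: (prime_gt1 pp) op; case: p {pp pc hF hmod r} => [|[|[|]]].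
have r3 : (2 < r)%N.
  apply: (leq_trans p3); rewrite /r -{1}(expn1 p) leq_exp2l //; exact: ltnW.
have hq : (#|F|.-1 = (r - 1) * (r + 1))%N.
  by rewrite hF mulnC expnM -/r -subn1 -(exp1n 2) subn_sqr.
have dn : (d %| #|F|.-1)%N.
  have h2 : (2 * d %| p ^ (2 * k) - 1)%N.
    rewrite -eqn_mod_dvd; first by rewrite hmod.
    by rewrite expn_gt0 prime_gt0.
  by rewrite hF -subn1; apply: dvdn_trans h2; apply: dvdn_mull.
have [g pg] := prim_gen F.
have n0 : (0 < #|F|.-1)%N by rewrite hq muln_gt0 addn1 andbT subn_gt0 ltnW.
have g0 : g != 0.
  apply/eqP => g0; have := prim_expr_order pg; rewrite g0 expr0n.
  by rewrite eqn0Ngt n0 /= => /eqP; rewrite eq_sym oner_eq0.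
have inS x : (x \in subfield_of_order F r) = (x ^+ r == x) by rewrite inE.
split.
- move=> H.
  have xS : g ^+ (r + 1) \in subfield_of_order F r.
    rewrite inS -exprM (eq_prim_root_expr pg) hq.
    have -> : ((r + 1) * r = (r - 1) * (r + 1) + (r + 1))%N.
      rewrite mulnBl mul1n subnK; first by rewrite mulnC.
      by rewrite leq_pmull // ltnW // ltnW.
    by rewrite -modnDml modnn add0n.
  have zS : (0 : F) \in subfield_of_order F r by rewrite inS expr0n; case: (r) r3.
  have x0 : g ^+ (r + 1) != 0 by rewrite expf_neq0.
  have /andP[_ /existsP[z /andP[z0 /eqP hz]]] := H _ _ xS zS x0.
  have [[i _] /= hi] := prim_rootP pg (unity_card z0).
  move: hz; rewrite subr0 hi -exprM => /eqP; rewrite (eq_prim_root_expr pg) => /eqP hm.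
  rewrite /dvdn -(modn_dvdm _ dn) hm modn_dvdm // modnMl //.
- case/dvdnP => m hm x y; rewrite !inS => /eqP xS /eqP yS xy.
  rewrite /gp_adj xy /=.
  have w0 : x - y != 0 by rewrite subr_eq0.
  have wS : (x - y) ^+ r = x - y by rewrite /r frob_sub // xS yS.
  have [[i _] /= hi] := prim_rootP pg (unity_card w0).
  move: wS; rewrite hi -exprM => /eqP; rewrite (eq_prim_root_expr pg).
  rewrite eqn_mod_dvd; last by rewrite leq_pmulr // ltnW // ltnW.
  have -> : (i * r - i = i * (r - 1))%N by rewrite mulnBr muln1.
  rewrite hq [(i * _)%N]mulnC dvdn_pmul2l; last by rewrite subn_gt0 ltnW.
  case/dvdnP => t ->; rewrite hm.
  apply/existsP; exists (g ^+ (t * m)); rewrite expf_neq0 //=.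
  by rewrite -exprM mulnA.
Qed.
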